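(* Let $k\ge1$, let $GP=GP(3k,k)$ and let $C_O$ be its outer cycle $u_0u_1\dots u_{3k-1}u_0$. Let $\phi:E(C_O)\to\{1,2,3\}$ be a proper edge colouring of $C_O$. Then the following are equivalent: (i) there is a proper edge colouring $\gamma:E(GP)\to\{1,2,3\}$ with $\gamma|_{E(C_O)}=\phi$; (ii) there is a permutation $(a,b,c)$ of $(1,2,3)$ such that for every $i=1,\dots,k$, the triples $\phi_i$ and $\phi_{i+1}$ are adjacent vertices in one of the graphs $T$ or $H$ (defined below with this choice of $a,b,c$). Furthermore, if a colouring $\gamma$ as in (i) exists, it is unique.
   Context: $GP(3k,k)$ has vertex set $\{u_i,v_i : i\in\mathbb{Z}_{3k}\}$ and edges $u_iu_{i+1}$, $u_iv_i$, $v_iv_{i+k}$ for $i\in\mathbb{Z}_{3k}$ (indices modulo $3k$). For a colouring $\phi$ of (at least) the outer cycle, set, for $i=1,\dots,k+1$, $\phi_i=(\phi(u_iu_{i+1}),\phi(u_{k+i}u_{k+i+1}),\phi(u_{2k+i}u_{2k+i+1}))$ with indices modulo $3k$ (so $\phi_{k+1}=(\phi(u_{k+1}u_{k+2}),\phi(u_{2k+1}u_{2k+2}),\phi(u_1u_2))$). A triple $(x,y,z)$ is written $xyz$. Given a permutation $(a,b,c)$ of $(1,2,3)$, $T$ is the triangle with vertices $abc$, $bca$, $cab$, and $H$ is the $6$-cycle $aba - bcc - aab - cbc - baa - ccb - aba$ on the six indicated triples. *)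

(* Defs.v *)
From mathcomp Require Import all_boot.
Set Implicit Arguments. Unset Strict Implicit. Unset Printing Implicit Defensive.

Definition is_colour (x : nat) : bool := (1 <= x <= 3).

(* Indices are taken modulo 3k.  An edge colouring of GP(3k,k) is encoded by
   three functions on edge indices i (0 <= i < 3k):
     go i = colour of the outer edge  u_i u_{i+1}
     gs i = colour of the spoke       u_i v_i
     gi i = colour of the inner edge  v_i v_{i+k}
   For k >= 1 these 9k edges are pairwise distinct, so this is exactly a map
   E(GP(3k,k)) -> {1,2,3}.  Similarly phi i = colour of u_i u_{i+1}. *)

Definition proper_outer (k : nat) (phi : nat -> nat) : Prop :=
  forall i, i < 3 * k ->
    is_colour (phi i) /\ phi i <> phi ((i + 1) %% (3 * k)).

Definition proper_GP (k : nat) (go gs gi : nat -> nat) : Prop :=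
  forall i, i < 3 * k ->
    [/\ is_colour (go i), is_colour (gs i), is_colour (gi i),
        (* vertex u_i : edges u_{i-1}u_i, u_iu_{i+1}, u_iv_i *)
        uniq [:: go ((i + 3 * k - 1) %% (3 * k)); go i; gs i] &
        (* vertex v_i : edges v_{i-k}v_i, v_iv_{i+k}, u_iv_i *)
        uniq [:: gi ((i + 2 * k) %% (3 * k)); gi i; gs i]].

Definition extends_GP (k : nat) (phi go gs gi : nat -> nat) : Prop :=
  proper_GP k go gs gi /\ (forall i, i < 3 * k -> go i = phi i).

Definition triple := (nat * nat * nat)%type.

Definition phit (k : nat) (phi : nat -> nat) (i : nat) : triple :=
  (phi (i %% (3 * k)), phi ((k + i) %% (3 * k)), phi ((2 * k + i) %% (3 * k))).

Definition is_perm3 (a b c : nat) : bool :=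
  perm_eq [:: a; b; c] [:: 1; 2; 3].

Definition adj_in (E : seq (triple * triple)) (x y : triple) : bool :=
  ((x, y) \in E) || ((y, x) \in E).

Definition T_edges (a b c : nat) : seq (triple * triple) :=
  [:: ((a, b, c), (b, c, a)); ((b, c, a), (c, a, b)); ((c, a, b), (a, b, c))].

Definition H_edges (a b c : nat) : seq (triple * triple) :=
  [:: ((a, b, a), (b, c, c)); ((b, c, c), (a, a, b)); ((a, a, b), (c, b, c));
      ((c, b, c), (b, a, a)); ((b, a, a), (c, c, b)); ((c, c, b), (a, b, a))].

Definition adj_T (a b c : nat) (x y : triple) : bool := adj_in (T_edges a b c) x y.
Definition adj_H (a b c : nat) (x y : triple) : bool := adj_in (H_edges a b c) x y.

(* Main.v *)
Require Import Defs.
From mathcomp Require Import all_boot zify.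

Definition cols : seq nat := [:: 1; 2; 3].
Definition valid (p q : triple) : bool :=
  let: (p1, p2, p3) := p in let: (q1, q2, q3) := q in
  [&& p1 \in cols, p2 \in cols, p3 \in cols, q1 \in cols, q2 \in cols, q3 \in cols,
      p1 != q1, p2 != q2, p3 != q3 & uniq [:: 6 - p1 - q1; 6 - p2 - q2; 6 - p3 - q3]].
Definition perms6 : seq triple := [:: (1,2,3);(1,3,2);(2,1,3);(2,3,1);(3,1,2);(3,2,1)].
Definition EE (t : triple) := let: (a, b, c) := t in T_edges a b c ++ H_edges a b c.
Definition Vs (t : triple) : seq triple := flatten [seq [:: e.1; e.2] | e <- EE t].
Definition adjt (t : triple) p q := let: (a, b, c) := t in adj_T a b c p q || adj_H a b c p q.

Lemma chk_perm : all (fun a => all (fun b => all (fun c =>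
   is_perm3 a b c ==> ((a, b, c) \in perms6)) cols) cols) cols.
Proof. by vm_compute. Qed.
Lemma chk_perm2 : all (fun t => let: (a,b,c) := t in is_perm3 a b c) perms6.
Proof. by vm_compute. Qed.
Lemma chk_F1 : all (fun t => all (fun e => valid e.1 e.2 && valid e.2 e.1) (EE t)) perms6.
Proof. by vm_compute. Qed.
Lemma chk_inv : all (fun t => all (fun p => all (fun q1 => all (fun q2 => all (fun q3 =>
   valid p (q1, q2, q3) ==> adjt t p (q1, q2, q3)) cols) cols) cols) (Vs t)) perms6.
Proof. by vm_compute. Qed.
Lemma chk_clo : all (fun t => all (fun e => (e.1 \in Vs t) && (e.2 \in Vs t)) (EE t)) perms6.
Proof. by vm_compute. Qed.
Lemma chk_start : all (fun p1 => all (fun p2 => all (fun p3 => all (fun q1 => all (fun q2 => all (fun q3 =>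
   valid (p1,p2,p3) (q1, q2, q3) ==> has (fun t => (p1,p2,p3) \in Vs t) perms6) cols) cols) cols) cols) cols) cols.
Proof. by vm_compute. Qed.

Lemma col3 x : is_colour x -> [\/ x = 1, x = 2 | x = 3].
Proof. rewrite /is_colour => /andP[h1 h2]. have: x = 1 \/ x = 2 \/ x = 3 by lia.
by case=> [->|[->|->]]; [apply: Or31|apply: Or32|apply: Or33]. Qed.
Lemma colE x : is_colour x -> x \in cols.
Proof. by case/col3 => ->. Qed.
Lemma third a b c : is_colour a -> is_colour b -> is_colour c -> uniq [:: a; b; c] -> c = 6 - a - b.
Proof. by move=> /col3[]-> /col3[]-> /col3[]->. Qed.
Lemma tri_fin gx gy gz sx sy sz : is_colour gx -> is_colour gy -> is_colour gz ->
  is_colour sx -> is_colour sy -> is_colour sz ->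
  uniq [:: gz; gx; sx] -> uniq [:: gx; gy; sy] -> uniq [:: gy; gz; sz] ->
  gx = sz /\ uniq [:: sx; sy; sz].
Proof. by move=> /col3[]-> /col3[]-> /col3[]-> /col3[]-> /col3[]-> /col3[]->. Qed.
Lemma sp_fin a b : is_colour a -> is_colour b -> a <> b ->
  is_colour (6 - a - b) /\ uniq [:: a; b; 6 - a - b].
Proof. by move=> /col3[]-> /col3[]-> h. Qed.

Lemma adjtE t p q : adjt t p q -> ((p, q) \in EE t) || ((q, p) \in EE t).
Proof.
case: t => [[a b] c]; rewrite /adjt /adj_T /adj_H /adj_in /EE !mem_cat.
by case/orP => /orP[] ->; rewrite ?orbT.
Qed.

Lemma F1 t p q : t \in perms6 -> adjt t p q -> valid p q.
Proof.
move=> ht /adjtE /orP[] he; have := allP (allP chk_F1 t ht) _ he; by case/andP.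
Qed.

Lemma valid_cols p1 p2 p3 q1 q2 q3 : valid (p1, p2, p3) (q1, q2, q3) ->
  [/\ p1 \in cols, p2 \in cols & p3 \in cols] /\ [/\ q1 \in cols, q2 \in cols & q3 \in cols].
Proof. by rewrite /valid => /and4P[h1 h2 h3 /and4P[h4 h5 h6 _]]. Qed.

Lemma inv t p q : t \in perms6 -> p \in Vs t -> valid p q -> adjt t p q.
Proof.
case: p q => [[p1 p2] p3] [[q1 q2] q3] ht hp hv.
have [_ [h1 h2 h3]] := valid_cols _ _ _ _ _ _ hv.
have := allP (allP (allP (allP (allP chk_inv t ht) _ hp) q1 h1) q2 h2) q3 h3.
by move/implyP; apply.
Qed.

Lemma clo t p q : t \in perms6 -> adjt t p q -> q \in Vs t.
Proof.
by move=> ht /adjtE /orP[] he; have/andP[] := allP (allP chk_clo t ht) _ he.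
Qed.

Lemma start p q : valid p q -> exists2 t, t \in perms6 & p \in Vs t.
Proof.
case: p q => [[p1 p2] p3] [[q1 q2] q3] hv.
have [[h1 h2 h3] [h4 h5 h6]] := valid_cols _ _ _ _ _ _ hv.
have := allP (allP (allP (allP (allP (allP chk_start p1 h1) p2 h2) p3 h3) q1 h4) q2 h5) q3 h6.
by move/implyP/(_ hv)/hasP.
Qed.

Lemma perm_of t : t \in perms6 -> let: (a, b, c) := t in is_perm3 a b c.
Proof. exact: (allP chk_perm2). Qed.

Lemma perm_in a b c : is_perm3 a b c -> (a, b, c) \in perms6.
Proof.
move=> h.
have ha : a \in cols by rewrite /cols -(perm_mem h) !inE eqxx.
have hb : b \in cols by rewrite /cols -(perm_mem h) !inE eqxx ?orbT.
have hc : c \in cols by rewrite /cols -(perm_mem h) !inE eqxx ?orbT.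
by have := allP (allP (allP chk_perm a ha) b hb) c hc => /implyP; apply.
Qed.

Definition sp k (phi : nat -> nat) j :=
  6 - phi ((j %% (3 * k) + (3 * k - 1)) %% (3 * k)) - phi (j %% (3 * k)).
Definition tri_ok k phi y := uniq [:: sp k phi y; sp k phi (y + k); sp k phi (y + 2 * k)].

Lemma sp_mod k phi y y' : y = y' %[mod 3 * k] -> sp k phi y = sp k phi y'.
Proof. by rewrite /sp => ->. Qed.

Lemma mod_add n a b c : a = b %[mod n] -> a + c = b + c %[mod n].
Proof. by move=> h; rewrite -modnDml h modnDml. Qed.

Lemma tri_congr k phi y y' : y = y' %[mod 3 * k] -> tri_ok k phi y = tri_ok k phi y'.
Proof.
move=> h; rewrite /tri_ok (@sp_mod _ _ _ _ h) (@sp_mod _ _ _ _ (@mod_add _ _ _ _ h)) (@sp_mod _ _ _ _ (@mod_add _ _ _ _ h)).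
by [].
Qed.

Lemma tri_rot k phi y : tri_ok k phi y -> tri_ok k phi (y + k).
Proof.
rewrite /tri_ok => h.
rewrite (_ : y + k + k = y + 2 * k); last lia.
rewrite (@sp_mod k phi (y + k + 2 * k) y); last first.
  by rewrite (_ : y + k + 2 * k = y + 3 * k) ?modnDr //; lia.
by move: h; rewrite -(rot_uniq 1).
Qed.

Lemma tri_mul k phi y m : tri_ok k phi y -> tri_ok k phi (y + m * k).
Proof.
elim: m => [|m IH] h; first by rewrite mul0n addn0.
rewrite (_ : y + m.+1 * k = y + m * k + k); first exact: (@tri_rot _ _ _ (IH h)).
rewrite mulSn; lia.
Qed.

Lemma tri_all k phi : 0 < k -> (forall i, 1 <= i <= k -> tri_ok k phi i.+1) ->
  forall j, tri_ok k phi j.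
Proof.
move=> hk H j.
have hx : tri_ok k phi ((j + 2 * k - 2) %% k + 2).
  have := H ((j + 2 * k - 2) %% k + 1).
  rewrite (_ : ((j + 2 * k - 2) %% k + 1).+1 = (j + 2 * k - 2) %% k + 2); last lia.
  apply; have := ltn_pmod (j + 2 * k - 2) hk; lia.
move: hx; set x := (j + 2 * k - 2) %% k + 2 => hx.
have hxm : x %% k = j %% k.
  rewrite /x modnDml (_ : j + 2 * k - 2 + 2 = 2 * k + j); last lia.
  by rewrite modnMDl.
have h1 : tri_ok k phi (x %% k).
  have e : x + 2 * (x %/ k) * k = x %% k %[mod 3 * k].
    have -> : x + 2 * (x %/ k) * k = x %/ k * (3 * k) + x %% k.
      have := divn_eq x k; clearbody x; move: (x %/ k) (x %% k) => q r; lia.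
    by rewrite modnMDl.
  by rewrite -(@tri_congr _ _ _ _ e); apply: tri_mul.
rewrite (divn_eq j k) addnC -hxm; exact: tri_mul.
Qed.

Lemma sp_succ k phi j : 0 < k ->
  sp k phi j.+1 = 6 - phi (j %% (3 * k)) - phi (j.+1 %% (3 * k)).
Proof.
move=> hk; rewrite /sp modnDml.
by rewrite (_ : j.+1 + (3 * k - 1) = j + 3 * k) ?modnDr //; lia.
Qed.

Lemma outer_step k phi j : 0 < k -> proper_outer k phi ->
  [/\ phi (j %% (3 * k)) \in cols, phi (j.+1 %% (3 * k)) \in cols &
      phi (j %% (3 * k)) != phi (j.+1 %% (3 * k))].
Proof.
move=> hk hphi; have hn : 0 < 3 * k by lia.
have [c1 n1] := hphi _ (ltn_pmod j hn).
have [c2 _] := hphi _ (ltn_pmod j.+1 hn).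
rewrite modnDml addn1 in n1.
by split; [exact: colE|exact: colE|apply/eqP].
Qed.

Lemma valid_step k phi i : 0 < k -> proper_outer k phi ->
  valid (phit k phi i) (phit k phi i.+1) = tri_ok k phi i.+1.
Proof.
move=> hk hphi.
rewrite /tri_ok !addSn (addnC i k) (addnC i (2 * k)) !sp_succ // /phit /valid !addnS.
have [a1 b1 c1] := @outer_step k phi i hk hphi.
have [a2 b2 c2] := @outer_step k phi (k + i) hk hphi.
have [a3 b3 c3] := @outer_step k phi (2 * k + i) hk hphi.
by rewrite a1 b1 c1 a2 b2 c2 a3 b3 c3.
Qed.

Lemma sp_prop k phi j : 0 < k -> proper_outer k phi ->
  is_colour (sp k phi j) /\
  uniq [:: phi ((j %% (3 * k) + (3 * k - 1)) %% (3 * k)); phi (j %% (3 * k)); sp k phi j].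
Proof.
move=> hk hphi; have hn : 0 < 3 * k by lia.
set p := (j %% (3 * k) + (3 * k - 1)) %% (3 * k).
have [ca ne] := hphi p (ltn_pmod _ hn).
have e : (p + 1) %% (3 * k) = j %% (3 * k).
  rewrite /p modnDml (_ : j %% (3 * k) + (3 * k - 1) + 1 = j %% (3 * k) + 3 * k); last lia.
  by rewrite modnDr modn_mod.
rewrite e in ne.
have [cb _] := hphi (j %% (3 * k)) (ltn_pmod _ hn).
rewrite /sp -/p; exact: sp_fin.
Qed.

Lemma GP_facts k phi go gs gi : 0 < k -> proper_outer k phi ->
  extends_GP k phi go gs gi -> forall x, x < 3 * k ->
  [/\ gs x = sp k phi x, gi x = sp k phi (x + 2 * k) & tri_ok k phi x].
Proof.
move=> hk hphi [hGP hgo]; have hn : 0 < 3 * k by lia.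
have gs_eq : forall x, x < 3 * k -> gs x = sp k phi x.
  move=> x hx; have [_ cgs _ u1 _] := hGP x hx.
  have hpx : (x + 3 * k - 1) %% (3 * k) < 3 * k by exact: ltn_pmod.
  rewrite !hgo // in u1.
  rewrite /sp (modn_small hx) (_ : x + (3 * k - 1) = x + 3 * k - 1); last lia.
  apply: third => //; first by case: (hphi _ hpx).
  by case: (hphi _ hx).
move=> x hx.
set y := (x + k) %% (3 * k); set z := (x + 2 * k) %% (3 * k).
have hy : y < 3 * k by exact: ltn_pmod.
have hz : z < 3 * k by exact: ltn_pmod.
have ey : (y + 2 * k) %% (3 * k) = x.
  rewrite /y modnDml (_ : x + k + 2 * k = x + 3 * k); last lia.
  by rewrite modnDr modn_small.
have ez : (z + 2 * k) %% (3 * k) = y.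
  rewrite /z /y modnDml (_ : x + 2 * k + 2 * k = (x + k) + 3 * k); last lia.
  by rewrite modnDr.
have [_ cx gx _ ux] := hGP x hx.
have [_ cy gy _ uy] := hGP y hy.
have [_ cz gz _ uz] := hGP z hz.
rewrite ey in uy; rewrite ez in uz.
have [e1 u] := @tri_fin _ _ _ _ _ _ gx gy gz cx cy cz ux uy uz.
rewrite !gs_eq // in e1 u.
have sy : sp k phi y = sp k phi (x + k) by apply: sp_mod; rewrite /y modn_mod.
have sz : sp k phi z = sp k phi (x + 2 * k) by apply: sp_mod; rewrite /z modn_mod.
rewrite sy sz in e1 u.
by split => //; apply: gs_eq.
Qed.

Theorem lemma3 (k : nat) (hk : 1 <= k) (phi : nat -> nat)
    (hphi : proper_outer k phi) :
  ((exists go gs gi : nat -> nat, extends_GP k phi go gs gi) <->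
   (exists a b c : nat, is_perm3 a b c /\
      forall i, 1 <= i <= k ->
        adj_T a b c (phit k phi i) (phit k phi i.+1) \/
        adj_H a b c (phit k phi i) (phit k phi i.+1)))
  /\
  (forall go gs gi go' gs' gi' : nat -> nat,
      extends_GP k phi go gs gi -> extends_GP k phi go' gs' gi' ->
      forall i, i < 3 * k -> [/\ go i = go' i, gs i = gs' i & gi i = gi' i]).
Proof.
have hn : 0 < 3 * k by lia.
have facts := fun go gs gi => @GP_facts k phi go gs gi hk hphi.
split; last first.
  move=> go gs gi go' gs' gi' h h' i hi.
  have [e1 e2 _] := facts _ _ _ h i hi.
  have [e1' e2' _] := facts _ _ _ h' i hi.
  have g1 := h.2 i hi; have g2 := h'.2 i hi.
  by split; congruence.
split.
  case=> go [gs [gi h]].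
  have tri : forall j, tri_ok k phi j.
    move=> j; rewrite (@tri_congr _ _ j (j %% (3 * k))); last by rewrite modn_mod.
    by have [_ _ ->] := facts _ _ _ h (j %% (3 * k)) (ltn_pmod _ hn).
  have vs : forall i, valid (phit k phi i) (phit k phi i.+1).
    by move=> i; rewrite valid_step.
  have [t ht hv] := @start _ _ (vs 1).
  have inV : forall i, i <= k -> phit k phi i.+1 \in Vs t.
    elim=> [|i IH] hi //.
    apply: (@clo _ _ _ ht); apply: (@inv _ _ _ ht (IH (ltnW hi)) (vs i.+1)).
  move: t ht hv inV => [[a b] c] ht _ inV.
  exists a, b, c; split; first exact: (@perm_of _ ht).
  move=> i /andP[h1 h2]; case: i h1 h2 => [//|i] _ h2.
  have := @inv _ _ _ ht (inV i (ltnW h2)) (vs i.+1).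
  by rewrite /adjt => /orP[]; [left|right].
case=> a [b [c [hp hst]]].
have ht := @perm_in _ _ _ hp.
have tri_step : forall i, 1 <= i <= k -> tri_ok k phi i.+1.
  move=> i hi; rewrite -valid_step //; apply: (@F1 (a, b, c) _ _ ht).
  by rewrite /adjt; case: (hst i hi) => ->; rewrite ?orbT.
have tri := @tri_all k phi hk tri_step.
exists phi, (sp k phi), (fun j => sp k phi (j + 2 * k)).
split => // i hi.
have [cs u] := @sp_prop k phi i hk hphi.
have [cs2 _] := @sp_prop k phi (i + 2 * k) hk hphi.
split => //.
- by case: (hphi i hi).
- rewrite (modn_small hi) in u.
  by rewrite (_ : i + 3 * k - 1 = i + (3 * k - 1)) //; lia.
- rewrite (@sp_mod k phi ((i + 2 * k) %% (3 * k) + 2 * k) (i + k)); last first.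
    by rewrite modnDml (_ : i + 2 * k + 2 * k = i + k + 3 * k) ?modnDr //; lia.
  by have := tri i; rewrite /tri_ok -(rot_uniq 1).
Qed.
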